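(* Let $K$ be a compact Hausdorff space with at least two points and let $\mathcal{A}$ be a non-empty subalgebra of $C(K,\mathbb{C})$. Suppose there is a subset $K_0\subset K$ such that for every $f\in C(K,\mathbb{C})$ and every $(x,y)\in K_0^2$ there exists a sequence $(f_n^{x,y})_{n\ge0}\subset\mathcal{A}$ with $f_n^{x,y}(t)\to f(t)$ as $n\to+\infty$ for $t\in\{x,y\}$. Suppose moreover that: (1) $\mathcal{A}$ separates the points of $K\setminus K_0$ (for distinct $x,y\in K\setminus K_0$ there is $g\in\mathcal{A}$ with $g(x)\neq g(y)$) and separates any point of $K_0$ from any (distinct) point of $K$; (2) at least one of the following holds: (2a) for every $x\in K\setminus K_0$ there exists $g\in\mathcal{A}$ with $g(x)\neq 0$, or (2b) $\mathcal{A}$ contains all constant functions; and (3) for every $g\in\mathcal{A}$ its complex conjugate $\bar g=\mathrm{Re}(g)-i\,\mathrm{Im}(g)$ belongs to $\mathcal{A}$. Then $\mathcal{A}$ is dense in $C(K,\mathbb{C})$ for the uniform norm.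
   Context: $C(K,\mathbb{C})$ is the algebra of continuous complex-valued functions on $K$ with the uniform norm $\|g\|=\sup_{x\in K}|g(x)|$; density and closure refer to this norm. *)

(* Defs.v *)
(* Complex numbers: CC R := R[i] = complex R
   (mathcomp-real-closed) for R : realType, viewed as a numClosedFieldType so that
   MathComp-Analysis equips it with its norm |.| and the induced topology. *)
From HB Require Import structures.
From mathcomp Require Import all_boot all_order all_algebra.
From mathcomp Require Import all_classical all_reals all_analysis.
From mathcomp Require Import complex.
Set Implicit Arguments. Unset Strict Implicit. Unset Printing Implicit Defensive.
Import Order.TTheory GRing.Theory Num.Theory.
Import numFieldNormedType.Exports.
Local Open Scope classical_set_scope.
Local Open Scope ring_scope.

Definition CC (R : realType) : numClosedFieldType := R[i].

Definition is_subalgebra (R : realType) (K : topologicalType)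
    (A : set (K -> CC R)) : Prop :=
  [/\ (forall g, A g -> continuous g),
      (forall g h, A g -> A h -> A (g \+ h)),
      (forall g h, A g -> A h -> A (g \* h)) &
      (forall (c : CC R) g, A g -> A (fun x => c * g x))].

Definition uniformly_dense (R : realType) (K : topologicalType)
    (A : set (K -> CC R)) : Prop :=
  forall f : K -> CC R, continuous f ->
  forall eps : R, 0 < eps ->
  exists2 g, A g & forall x, `|f x - g x| <= (eps%:C)%C.

(* Main.v *)
Require Import Defs.
From HB Require Import structures.
From mathcomp Require Import all_boot all_order all_algebra.
From mathcomp Require Import all_classical all_reals all_analysis.
From mathcomp Require Import complex.
Import Order.TTheory GRing.Theory Num.Theory.
Import numFieldNormedType.Exports.
Local Open Scope classical_set_scope.
Local Open Scope ring_scope.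
From mathcomp Require Import ring lra.
Fixpoint Pit {R : realType} {T : Type} (S : T -> R) (n : nat) : T -> R :=
  match n with
  | 0%N => fun _ => 0
  | n'.+1 => fun x => Pit S n' x + (S x - Pit S n' x ^+ 2) / 2
  end.

Section PP.
Variables (K : topologicalType) (x0 : K).
Definition pK : Type := K.
HB.instance Definition _ := Topological.copy pK K.
HB.instance Definition _ := isPointed.Build pK x0.
Lemma cc : compact [set: K] -> @cover_compact K [set: K].
Proof.
move=> Kc.
have : @cover_compact pK [set: pK] by rewrite -compact_cover.
exact.
Qed.
End PP.
Section Aux.
Variable R : realType.

Lemma conjE (z : CC R) : z^* = (z^*)%C.
Proof. by []. Qed.
Lemma ReC (z : CC R) : ((complex.Re z)%:C%C : CC R) = 2^-1 * (z + z^*).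
Proof. by rewrite conjE ReJ_add mulrC. Qed.
Lemma normC (a : R) : `|(a%:C)%C : CC R| = (`|a|%:C)%C.
Proof.
have [a0|a0] := leP 0 a.
  by rewrite ger0_norm ?ger0_norm // lecR.
rewrite ltr0_norm ?ltr0_norm ?ltcR //; by rewrite  (rmorphN (real_complex R)).
Qed.
Lemma RCD (a b : R) : ((a + b)%:C%C : CC R) = a%:C%C + b%:C%C.
Proof. exact: rmorphD. Qed.
Lemma RCM (a b : R) : ((a * b)%:C%C : CC R) = a%:C%C * b%:C%C.
Proof. exact: rmorphM. Qed.

Lemma ReB (z w : CC R) : complex.Re (z - w) = complex.Re z - complex.Re w.
Proof. by case: z w => a b [c d]. Qed.
Lemma ImB (z w : CC R) : complex.Im (z - w) = complex.Im z - complex.Im w.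
Proof. by case: z w => a b [c d]. Qed.

Lemma normIm (z : CC R) : (`|complex.Im z|%:C)%C <= `|z|.
Proof.
case: z => a b; rewrite !normc_def /= lecR.
by rewrite -sqrtr_sqr ler_sqrt ?addr_ge0 ?sqr_ge0 // lerDr sqr_ge0.
Qed.

Lemma Re_cont : continuous (fun z : CC R => complex.Re z).
Proof.
move=> z; apply/(@cvgrPdist_lt _ _ _ _ (nbhs_filter z)) => e e0.
apply/nbhs_ballP; exists (e%:C)%C; first by rewrite /= ltcR.
move=> w; rewrite /ball /= => hw.
rewrite -ReB -ltcR; exact: le_lt_trans (normc_ge_Re _) hw.
Qed.

Lemma Im_cont : continuous (fun z : CC R => complex.Im z).
Proof.
move=> z; apply/(@cvgrPdist_lt _ _ _ _ (nbhs_filter z)) => e e0.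
apply/nbhs_ballP; exists (e%:C)%C; first by rewrite /= ltcR.
move=> w; rewrite /ball /= => hw.
rewrite -ImB -ltcR; exact: le_lt_trans (normIm _) hw.
Qed.

Lemma sqrt_iter (r : R) (p : nat -> R) : 0 <= r <= 1 -> p 0%N = 0 ->
  (forall n, p n.+1 = p n + (r ^+ 2 - p n ^+ 2) / 2) ->
  forall n, [/\ 0 <= p n, 0 <= r - p n & (r - p n) * (n%:R + 2) <= 2].
Proof.
move=> /andP[r0 r1] p0 pS; elim=> [|n [h1 h2 h3]].
  by rewrite p0 subr0 add0r; split => //; lra.
rewrite pS.
have -> : (n.+1%:R : R) = n%:R + 1 by rewrite -natr1.
have N0 : 0 <= n%:R :> R by rewrite ler0n.
move: h1 h2 h3 N0; set q := p n; set N := n%:R; clearbody q N => h1 h2 h3 N0.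
have e1 : r - q <= 1 by lra.
have -> : r - (q + (r ^+ 2 - q ^+ 2) / 2) = (r - q) * (1 - (r + q) / 2).
  by rewrite !expr2; field.
have f1 : 0 <= 1 - (r + q) / 2 by lra.
have f2 : 1 - (r + q) / 2 <= 1 - (r - q) / 2 by lra.
split.
- have h4 : 0 <= (r - q) * (r + q) by apply: mulr_ge0 => //; lra.
  rewrite (_ : r ^+ 2 - q ^+ 2 = (r - q) * (r + q)); last by ring.
  by apply: addr_ge0 => //; apply: divr_ge0.
- exact: mulr_ge0.
- have g1 : (r - q) * (1 - (r + q) / 2) <= (r - q) * (1 - (r - q) / 2).
    exact: ler_wpM2l.
  have g2 : 0 <= (2 - (r - q) * (N + 2)) * (2 - (r - q)) by nra.
  nra.
Qed.
End Aux.
Section SW.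
Variables (R : realType) (K : topologicalType) (A : set (K -> CC R)).
Hypothesis Acont : forall g, A g -> continuous g.
Hypothesis Aadd : forall g h, A g -> A h -> A (g \+ h).
Hypothesis Amul : forall g h, A g -> A h -> A (g \* h).
Hypothesis Ascal : forall (c : CC R) g, A g -> A (fun x => c * g x).
Hypothesis A0 : A (fun _ => 0).
Hypothesis Kc : compact [set: K].

Definition AR (a : K -> R) := A (fun x => (a x)%:C%C).

Lemma AR_ext a b : (forall x, a x = b x) -> AR a -> AR b.
Proof.
move=> e; rewrite /AR.
by have -> : (fun x => (b x)%:C%C : CC R) = (fun x => (a x)%:C%C) by apply/funext => x; rewrite e.
Qed.

Lemma AR_add a b : AR a -> AR b -> AR (fun x => a x + b x).
Proof.
move=> ha hb; rewrite /AR.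
have -> : (fun x => ((a x + b x)%:C)%C : CC R) = (fun x => (a x)%:C%C) \+ (fun x => (b x)%:C%C).
  by apply/funext => x /=; rewrite RCD.
exact: Aadd.
Qed.

Lemma AR_mul a b : AR a -> AR b -> AR (fun x => a x * b x).
Proof.
move=> ha hb; rewrite /AR.
have -> : (fun x => ((a x * b x)%:C)%C : CC R) = (fun x => (a x)%:C%C) \* (fun x => (b x)%:C%C).
  by apply/funext => x /=; rewrite RCM.
exact: Amul.
Qed.

Lemma AR_scal c a : AR a -> AR (fun x => c * a x).
Proof.
move=> ha; rewrite /AR.
have -> : (fun x => ((c * a x)%:C)%C : CC R) = (fun x => c%:C%C * (a x)%:C%C).
  by apply/funext => x /=; rewrite RCM.
exact: Ascal.
Qed.

Lemma AR_0 : AR (fun _ => 0).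
Proof. exact: A0. Qed.

Lemma AR_cont a : AR a -> continuous a.
Proof.
move=> ha x.
exact: (continuous_comp (Acont _ ha x) (@Re_cont R _)).
Qed.

Lemma cont_bounded (a : K -> R) : continuous a -> exists M, 0 < M /\ forall x, `|a x| <= M.
Proof.
move=> ca.
have cK : compact (a @` [set: K]).
  by apply: continuous_compact => //; exact: continuous_subspaceT.
have := compact_bounded cK.
move=> [M [Mr HM]].
exists (Num.max M 0 + 1); split; first by rewrite ltr_wpDl // le_max lexx orbT.
move=> x; apply: (HM (Num.max M 0 + 1)); last by exists x.
by rewrite ltr_pwDr // le_max lexx.
Qed.
Lemma AR_Pit S n : AR S -> AR (Pit S n).
Proof.
move=> hS; elim: n => [|n IH] /=; first exact: AR_0.
apply: AR_add => //.
apply: (@AR_ext (fun x => 2^-1 * (S x + (-1) * (Pit S n x * Pit S n x)))).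
  by move=> x; rewrite expr2; ring.
by apply: AR_scal; apply: AR_add => //; apply: AR_scal; apply: AR_mul.
Qed.

Lemma AR_abs a : AR a -> forall eps, 0 < eps ->
  exists2 b, AR b & forall x, `| `|a x| - b x| <= eps.
Proof.
move=> ha eps e0.
have [M [M0 HM]] := @cont_bounded a (AR_cont _ ha).
pose S x := (M ^+ 2)^-1 * (a x * a x).
have hS : AR S by apply: AR_scal; apply: AR_mul.
have Me0 : 0 <= 2 * M / eps by rewrite divr_ge0 ?mulr_ge0 ?ltW.
set n := Num.Def.archi_bound (2 * M / eps).
have hn := archi_boundP Me0; rewrite -/n in hn.
exists (fun x => M * Pit S n x); first by apply: AR_scal; apply: AR_Pit.
move=> x.
pose r := `|a x| / M.
have r0 : 0 <= r by apply: divr_ge0 => //; apply: ltW.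
have r1 : r <= 1 by rewrite ler_pdivrMr // mul1r.
have rS : S x = r ^+ 2.
  rewrite /S /r expr_div_n real_normK ?num_real // expr2; field.
  by rewrite lt0r_neq0.
have hrec : forall k, Pit S k.+1 x = Pit S k x + (r ^+ 2 - Pit S k x ^+ 2) / 2.
  by move=> k /=; rewrite rS.
have r01 : 0 <= r <= 1 by rewrite r0 r1.
have [h1 h2 h3] := @sqrt_iter R r (fun k => Pit S k x) r01 erefl hrec n.
have -> : `|a x| = M * r by rewrite /r mulrC divfK // lt0r_neq0.
rewrite -mulrBr ger0_norm; last by apply: mulr_ge0 => //; apply: ltW.
move: h2 h3; set d := r - Pit S n x; set N := n%:R => h2 h3.
have N0 : 0 <= N by rewrite ler0n.
have g1 : 2 * M < N * eps by rewrite -ltr_pdivrMr.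
have g2 : M * (d * (N + 2)) <= M * 2 by apply: ler_wpM2l => //; apply: ltW.
nra.
Qed.
Definition Cl (h : K -> R) := forall eps, 0 < eps ->
  exists2 a, AR a & forall x, `|h x - a x| <= eps.

Lemma Cl_AR a : AR a -> Cl a.
Proof. by move=> ha eps e0; exists a => // x; rewrite subrr normr0 ltW. Qed.

Lemma Cl_lim h : (forall eps, 0 < eps -> exists2 g, Cl g & forall x, `|h x - g x| <= eps) -> Cl h.
Proof.
move=> H eps e0.
have e2 : 0 < eps / 2 by rewrite divr_gt0.
have [g cg hg] := H _ e2.
have [a ha hga] := cg _ e2.
exists a => // x.
have := ler_normD (h x - g x) (g x - a x).
rewrite (_ : h x - g x + (g x - a x) = h x - a x); last by ring.
move: (hg x) (hga x); lra.
Qed.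

Lemma Cl_add h1 h2 : Cl h1 -> Cl h2 -> Cl (fun x => h1 x + h2 x).
Proof.
move=> c1 c2 eps e0.
have e2 : 0 < eps / 2 by rewrite divr_gt0.
have [a1 ha1 h1a] := c1 _ e2.
have [a2 ha2 h2a] := c2 _ e2.
exists (fun x => a1 x + a2 x); first exact: AR_add.
move=> x.
have := ler_normD (h1 x - a1 x) (h2 x - a2 x).
rewrite (_ : h1 x - a1 x + (h2 x - a2 x) = h1 x + h2 x - (a1 x + a2 x)); last by ring.
move: (h1a x) (h2a x); lra.
Qed.

Lemma Cl_scal c h : Cl h -> Cl (fun x => c * h x).
Proof.
move=> ch eps e0.
have c1 : 0 < `|c| + 1 by rewrite ltr_pwDr.
have e1 : 0 < eps / (`|c| + 1) by rewrite divr_gt0.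
have [a ha hh] := ch _ e1.
exists (fun x => c * a x); first exact: AR_scal.
move=> x; rewrite -mulrBr normrM.
have := hh x; rewrite ler_pdivlMr // => h1.
have h2 : `|c| * `|h x - a x| <= (`|c| + 1) * `|h x - a x|.
  by rewrite ler_wpM2r // lerDl.
nra.
Qed.

Lemma Cl_abs h : Cl h -> Cl (fun x => `|h x|).
Proof.
move=> ch eps e0.
have e2 : 0 < eps / 2 by rewrite divr_gt0.
have [a ha hh] := ch _ e2.
have [b hb hab] := AR_abs _ ha _ e2.
exists b => // x.
have := ler_normD (`|h x| - `|a x|) (`|a x| - b x).
rewrite (_ : `|h x| - `|a x| + (`|a x| - b x) = `|h x| - b x); last by ring.
have := ler_dist_dist (h x) (a x).
move: (hh x) (hab x); lra.
Qed.

Lemma Cl_min h1 h2 : Cl h1 -> Cl h2 -> Cl (fun x => if h1 x <= h2 x then h1 x else h2 x).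
Proof.
move=> c1 c2.
have : Cl (fun x => 2^-1 * ((h1 x + h2 x) + (-1) * `|h1 x + (-1) * h2 x|)).
  apply: Cl_scal; apply: Cl_add; first exact: Cl_add.
  by apply: Cl_scal; apply: Cl_abs; apply: Cl_add => //; apply: Cl_scal.
move=> H eps e0; have [a ha hh] := H _ e0; exists a => // x.
suff -> : (if h1 x <= h2 x then h1 x else h2 x) = 2^-1 * ((h1 x + h2 x) + (-1) * `|h1 x + (-1) * h2 x|) by [].
case: ifP => h12.
  have n0 : h1 x + (-1) * h2 x <= 0 by lra.
  by rewrite (ler0_norm n0); field.
have n0 : 0 <= h1 x + (-1) * h2 x.
  by move/negbT: h12; rewrite -ltNge => h12; lra.
by rewrite (ger0_norm n0); field.
Qed.

Lemma Cl_neg h : Cl h -> Cl (fun x => - h x).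
Proof.
move=> ch eps e0; have [a ha hh] := @Cl_scal (-1) h ch _ e0.
by exists a => // x; rewrite -mulN1r; apply: hh.
Qed.
Lemma Cl_minseq (I : eqType) (s : seq I) (G : I -> K -> R) :
  s != [::] -> (forall i, i \in s -> Cl (G i)) ->
  exists2 h, Cl h & forall z, (forall i, i \in s -> h z <= G i z) /\
                              (exists2 i, i \in s & h z = G i z).
Proof.
elim: s => [//|j s IH] _ HG.
case: s IH HG => [|k s] IH HG.
  exists (G j); first by apply: HG; rewrite mem_head.
  move=> z; split; first by move=> i; rewrite inE => /eqP ->.
  by exists j; rewrite ?mem_head.
have [h ch Hh] : exists2 h, Cl h & forall z, (forall i, i \in k :: s -> h z <= G i z) /\
                              (exists2 i, i \in k :: s & h z = G i z).
  by apply: IH => // i hi; apply: HG; rewrite inE hi orbT.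
exists (fun z => if G j z <= h z then G j z else h z).
  by apply: Cl_min => //; apply: HG; rewrite mem_head.
move=> z; have [Hle Hex] := Hh z; split.
  move=> i; rewrite inE => /orP [/eqP -> | hi]; case: ifP => c //.
  - by move/negbT: c; rewrite -ltNge => /ltW.
  - exact: le_trans c (Hle i hi).
  - exact: Hle.
case: ifP => c; first by exists j; rewrite ?mem_head.
by have [i hi ->] := Hex; exists i => //; rewrite inE hi orbT.
Qed.

Lemma Cl_maxseq (I : eqType) (s : seq I) (G : I -> K -> R) :
  s != [::] -> (forall i, i \in s -> Cl (G i)) ->
  exists2 h, Cl h & forall z, (forall i, i \in s -> G i z <= h z) /\
                              (exists2 i, i \in s & h z = G i z).
Proof.
move=> sn HG.
have [h ch Hh] := @Cl_minseq I s (fun i z => - G i z) sn (fun i hi => @Cl_neg _ (HG i hi)).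
exists (fun z => - h z); first exact: Cl_neg.
move=> z; have [Hle [i hi Hi]] := Hh z; split.
  by move=> j hj; rewrite lerNr; apply: Hle.
by exists i => //; rewrite Hi opprK.
Qed.

Lemma open_lt_fun (u v : K -> R) (c : R) : continuous u -> continuous v ->
  open [set z | u z < v z + c].
Proof.
move=> cu cv.
rewrite (_ : [set z | u z < v z + c] = (u - v) @^-1` [set t | t < c]).
  apply: open_comp; last exact: open_lt.
  by move=> z _; exact: (continuousB (cu z) (cv z)).
have E : forall z, (u - v) z = u z - v z by [].
by apply/seteqP; split => z /=; rewrite E ltrBlDl addrC.
Qed.

Lemma open_allseq (I : eqType) (s : seq I) (P : I -> set K) :
  (forall i, open (P i)) -> open [set z | forall i, i \in s -> P i z].
Proof.
elim: s => [|j s IH] HP.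
  rewrite (_ : [set z | _] = setT); first exact: openT.
  by apply/seteqP; split => z //= _ i; rewrite in_nil.
rewrite (_ : [set z | _ ] = P j `&` [set z | forall i, i \in s -> P i z]).
  exact: openI (HP j) (IH HP).
apply/seteqP; split => z /=.
  move=> H; split; first by apply: H; rewrite mem_head.
  by move=> i hi; apply: H; rewrite inE hi orbT.
by move=> [H1 H2] i; rewrite inE => /orP[/eqP -> // | hi]; exact: H2.
Qed.
Lemma real_SW (x0 : K) (f : K -> R) : continuous f ->
  (forall x y, exists2 a, AR a & a x = f x /\ a y = f y) -> Cl f.
Proof.
move=> cf Hint; apply: Cl_lim => eps e0.
have Kc' := @cc K x0 Kc.
have st1 : forall x, exists h, Cl h /\ (forall z, h z < f z + eps) /\
    exists V, [/\ open V, V x & forall z, V z -> f z - eps < h z].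
  move=> x.
  have Hex : forall y, exists a : K -> R, AR a /\ a x = f x /\ a y = f y.
    by move=> y; have [a ? ?] := Hint x y; exists a.
  have [gg Hgg] := choice Hex.
  have cov : [set: K] `<=` cover [set: K] (fun y => [set z | gg y z < f z + eps]).
    move=> z _; exists z => //=; have [_ [_ ->]] := Hgg z; by rewrite ltrDl.
  have [D _ HD] := Kc' K setT (fun y => [set z | gg y z < f z + eps])
    (fun y _ => @open_lt_fun (gg y) f eps (AR_cont _ (proj1 (Hgg y))) cf) cov.
  have [y0 hy0 _] := HD x I.
  have Dn : (finmap.enum_fset D) != [::] by apply/eqP => e; have : y0 \in finmap.enum_fset D := hy0; rewrite e.
  have [h ch Hh] := @Cl_minseq K (finmap.enum_fset D) gg Dn (fun i _ => Cl_AR _ (proj1 (Hgg i))).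
  exists h; split => //; split.
    move=> z; have [y hy hz] := HD z I; have [Hle _] := Hh z.
    exact: le_lt_trans (Hle y hy) hz.
  exists [set z | forall y, y \in (finmap.enum_fset D) -> f z < gg y z + eps]; split.
  - apply: open_allseq => y; apply: open_lt_fun => //; exact: AR_cont (proj1 (Hgg y)).
  - by move=> y _; have [_ [-> _]] := Hgg y; rewrite ltrDl.
  - by move=> z Vz; have [_ [y hy ->]] := Hh z; have := Vz y hy; lra.
have [hh Hhh] := choice st1.
have HexV : forall x, exists V : set K, [/\ open V, V x &
    forall z, V z -> f z - eps < hh x z].
  by move=> x; have [_ [_ [V HV]]] := Hhh x; exists V.
have [VV HVV] := choice HexV.
have cov : [set: K] `<=` cover [set: K] VV.
  by move=> z _; exists z => //; have [_ ? _] := HVV z.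
have [D _ HD] := Kc' K setT VV (fun y _ => let: And3 o _ _ := HVV y in o) cov.
have [y0 hy0 _] := HD x0 I.
have Dn : (finmap.enum_fset D) != [::] by apply/eqP => e; have : y0 \in finmap.enum_fset D := hy0; rewrite e.
have [H cH HH] := @Cl_maxseq K (finmap.enum_fset D) hh Dn (fun i _ => proj1 (Hhh i)).
exists H => // z.
have [y hy hz] := HD z I.
have [Hge [x hx Hx]] := HH z.
have h1 := Hge y hy.
have [_ _ h2] := HVV y; have {}h2 := h2 z hz.
have [_ [h3 _]] := Hhh x; have {}h3 := h3 z.
rewrite Hx in h1 *.
rewrite ler_norml; apply/andP; split; lra.
Qed.
Hypothesis Aconj : forall g, A g -> A (fun x => (g x)^*).

Lemma AR_Re g : A g -> AR (fun x => complex.Re (g x)).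
Proof.
move=> hg; rewrite /AR.
have -> : (fun x => ((complex.Re (g x))%:C)%C : CC R) =
    (fun x => 2^-1 * ((g \+ (fun x => (g x)^*)) x)).
  by apply/funext => x; rewrite ReC.
by apply: Ascal; apply: Aadd => //; exact: Aconj.
Qed.

Lemma interp_e (x y : K) : (exists2 g, A g & g x <> g y) ->
  (exists2 g, A g & g x <> 0) -> exists2 e, A e & e x = 1 /\ e y = 0.
Proof.
move=> [g1 h1 d1] [g2 h2 n2].
have [b0|bn0] := eqVneq (g1 y) 0.
  have a0 : g1 x != 0 by apply/eqP; rewrite -b0.
  exists (fun z => (g1 x)^-1 * g1 z); first exact: Ascal.
  by rewrite b0 mulr0 mulVf.
have [a0|an0] := eqVneq (g1 x) 0.
  exists (fun z => (g2 x)^-1 * (g2 z + (- g2 y) * ((g1 y)^-1 * g1 z))).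
    by apply: Ascal; apply: (Aadd _ _ h2); apply: Ascal; apply: Ascal.
  rewrite a0 mulr0 mulr0 addr0 mulVf; last exact/eqP.
  by rewrite mulVf // mulr1 addrN mulr0.
have ab : g1 x - g1 y != 0 by rewrite subr_eq0; apply/eqP.
exists (fun z => (g1 x * (g1 x - g1 y))^-1 * (g1 z * g1 z + (- g1 y) * g1 z)).
  by apply: Ascal; apply: (Aadd _ _ (Amul _ _ h1 h1)); apply: Ascal.
split.
  rewrite (_ : g1 x * g1 x + - g1 y * g1 x = g1 x * (g1 x - g1 y)); last by ring.
  by rewrite mulVf // mulf_neq0.
by rewrite (_ : g1 y * g1 y + - g1 y * g1 y = 0) ?mulr0 //; ring.
Qed.

Hypothesis Sep : forall x y, x <> y -> exists2 g, A g & g x <> g y.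
Hypothesis NV : forall x, exists2 g, A g & g x <> 0.

Lemma interp x y (al be : CC R) : (x = y -> al = be) ->
  exists2 g, A g & g x = al /\ g y = be.
Proof.
move=> hxy.
have [exy|nxy] := pselect (x = y).
  subst y; rewrite -(hxy erefl).
  have [g2 h2 n2] := NV x.
  exists (fun z => al * ((g2 x)^-1 * g2 z)); first by apply: Ascal; apply: Ascal.
  by rewrite mulVf ?mulr1 //; apply/eqP.
have [e1 he1 [e1x e1y]] := @interp_e x y (Sep _ _ nxy) (NV x).
have [e2 he2 [e2y e2x]] := @interp_e y x (Sep _ _ (fun e => nxy (esym e))) (NV y).
exists (fun z => al * e1 z + be * e2 z).
  by apply: (Aadd _ _ (Ascal _ _ he1) (Ascal _ _ he2)).
by rewrite e1x e1y e2x e2y !mulr1 !mulr0 addr0 add0r.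
Qed.

Lemma interpR (f : K -> R) x y : exists2 a, AR a & a x = f x /\ a y = f y.
Proof.
have [g hg [gx gy]] := @interp x y ((f x)%:C)%C ((f y)%:C)%C (fun e => f_equal (fun t => ((f t)%:C)%C : CC R) e).
exists (fun z => complex.Re (g z)); first exact: AR_Re.
by rewrite gx gy.
Qed.

Lemma normi : `|'i%C : CC R| = 1.
Proof. by rewrite normc_def /= expr0n /= add0r expr1n sqrtr1. Qed.

Lemma dense_main (x0 : K) : uniformly_dense A.
Proof.
move=> f cf eps e0.
pose fr z := complex.Re (f z); pose fi z := complex.Im (f z).
have cfr : continuous fr := fun z => continuous_comp (cf z) (@Re_cont R _).
have cfi : continuous fi := fun z => continuous_comp (cf z) (@Im_cont R _).
have e2 : 0 < eps / 2 by rewrite divr_gt0.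
have [a1 ha1 H1] := real_SW x0 fr cfr (interpR fr) _ e2.
have [a2 ha2 H2] := real_SW x0 fi cfi (interpR fi) _ e2.
exists (fun z => (a1 z)%:C%C + 'i%C * (a2 z)%:C%C).
  exact: (Aadd _ _ ha1 (Ascal _ _ ha2)).
move=> z.
have -> : f z - ((a1 z)%:C%C + 'i%C * (a2 z)%:C%C) =
    ((fr z - a1 z)%:C)%C + 'i%C * ((fi z - a2 z)%:C)%C.
  rewrite !(rmorphB (real_complex R)) /fr /fi.
  set u := f z; rewrite {1}(complexE u); ring.
apply: le_trans (ler_normD _ _) _.
rewrite normrM normi mul1r !normC -RCD lecR.
have := H1 z; have := H2 z; lra.
Qed.
End SW.

Theorem corollary1 (R : realType) (K : topologicalType)
  (A : set (K -> CC R)) (K0 : set K) :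
  hausdorff_space K -> compact [set: K] ->
  (exists x y : K, x <> y) ->
  is_subalgebra A -> A !=set0 ->
  (forall f : K -> CC R, continuous f -> forall x y, K0 x -> K0 y ->
     exists u : nat -> (K -> CC R), (forall n, A (u n)) /\
       (u n x @[n --> \oo] --> f x) /\ (u n y @[n --> \oo] --> f y)) ->
  (forall x y, ~ K0 x -> ~ K0 y -> x <> y -> exists2 g, A g & g x <> g y) ->
  (forall x y, K0 x -> x <> y -> exists2 g, A g & g x <> g y) ->
  ((forall x, ~ K0 x -> exists2 g, A g & g x <> 0) \/
   (forall c : CC R, A (fun _ => c))) ->
  (forall g, A g -> A (fun x => (g x)^*)) ->
  uniformly_dense A.
Proof.
move=> _ Kc [x0 _] [Acont Aadd Amul Ascal] [g0 Ag0] Happ Hsep1 Hsep2 Hnv Aconj.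
have A0 : A (fun _ => 0).
  have := Ascal 0 g0 Ag0.
  by rewrite (_ : (fun x => 0 * g0 x) = (fun _ => 0)) // funeqE => x; rewrite mul0r.
have Sep : forall x y, x <> y -> exists2 g, A g & g x <> g y.
  move=> x y nxy.
  have [kx|kx] := pselect (K0 x); first exact: Hsep2.
  have [ky|ky] := pselect (K0 y); last exact: Hsep1.
  have [g hg dg] := Hsep2 y x ky (fun e => nxy (esym e)).
  by exists g => // e; apply: dg; rewrite e.
have NV : forall x, exists2 g, A g & g x <> 0.
  move=> x; case: Hnv => [Hnv|Hc]; last first.
    by exists (fun _ => 1); [exact: Hc | move=> /= /eqP; rewrite oner_eq0].
  have [kx|kx] := pselect (K0 x); last exact: Hnv.
  have c1 : continuous (fun _ : K => (1 : CC R)) by move=> z; exact: cvg_cst.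
  have [u [Au [cu _]]] := Happ (fun _ => 1) c1 x x kx kx.
  move/cvgrPdist_lt: cu => /(_ 1 ltr01) H.
  have [n hn] := filter_ex H.
  exists (u n) => // e; move: hn; rewrite e subr0 normr1 ltxx.
  done.
exact: (@dense_main R K A Acont Aadd Amul Ascal A0 Kc Aconj Sep NV x0).
Qed.
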